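(* Consider the multi-agent setting described in the context, with parameters $\alpha>0$ and $F\in\mathbb Z_{\ge0}$. Assume: - the set $\mathcal A$ of misbehaving agents is $F$-local; - the digraph $\mathcal D$ is $(2F+1)$-robust. Let $x_{\mathcal N}:[0,t_1)\to\mathbb R^{|\mathcal N|}$ be a trajectory of the normal agents and let $V(x)=\max_k x_k-\min_k x_k$. Then the derivative $\frac{d}{dt}V(x_{\mathcal N}(t))$ exists at almost all $t\in[0,t_1)$. Furthermore, at almost all $t\in[0,t_1)$ with $x_{\mathcal N}(t)\notin\mathrm{span}(\mathbf 1)$, $$\frac{d}{dt}V(x_{\mathcal N}(t))\le-\alpha<0.$$
   Context: Setting. Let $\mathcal D=(\mathcal V,\mathcal E)$ be a digraph with $\mathcal V=\{1,\dots,n\}$ and $n\ge2$. An edge $(i,j)\in\mathcal E$ means that agent $j$ receives information from agent $i$. The in-neighbor set of $i$ is $\mathcal V_i=\{j:(j,i)\in\mathcal E\}$, and $\mathcal J_i=\mathcal V_i\cup\{i\}$. - A nonempty $S\subset\mathcal V$ is $r$-reachable if some $i\in S$ has $|\mathcal V_i\setminus S|\ge r$. - $\mathcal D$ is $r$-robust if for every pair of nonempty disjoint subsets of $\mathcal V$, at least one of them is $r$-reachable. Dynamics and communication. Each agent has a scalar state with $\dot x_i(t)=u_i(t)$. Fix a strictly increasing $g:\mathbb R\to\mathbb R$ (not necessarily continuous). At time $t$, agent $i$ receives from each in-neighbor $j$ a value $g(x^i_j(t))$. The agents are partitioned into normal agents $\mathcal N$ and misbehaving agents $\mathcal A$. -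 A normal agent $j$ sends $g(x_j(t))$ to all its out-neighbors, so $x^i_j=x_j$, and updates via the FTRC protocol. - Misbehaving agents may use arbitrary inputs and may send arbitrary, possibly different, values to different out-neighbors. The only restriction is that $t\mapsto g(x^i_k(t))$ is Lebesgue measurable for all $k\in\mathcal A$ and $i\in\mathcal N$. - $\mathcal A$ is $F$-local if $|\mathcal V_i\cap\mathcal A|\le F$ for every $i\in\mathcal V\setminus\mathcal A$. FTRC protocol for a normal agent $i$ at time $t$: 1. Sort the received values $g(x^i_j(t))$, $j\in\mathcal V_i$. 2. If fewer than $F$ values are strictly larger than $g(x_i(t))$, remove all values strictly larger than $g(x_i(t))$; otherwise remove exactly the $F$ largest values. 3. Likewise, if fewer than $F$ values are strictly smaller than $g(x_i(t))$, remove all values strictly smaller; otherwise remove exactly the $F$ smallest values. 4. With $\mathcal R_i(t)$ the set of agents whose values were removed, set $u_i(t)=\alpha\,\mathrm{sign}\big(\sum_{j\in\mathcal J_i\setminus\mathcal R_i(t)}(g(x^i_j(t))-g(x_i(t)))\big)$, where $x^i_i=x_i$ and $\mathrm{sign}(0)=0$. Trajectories. Write $x_{\mathcal N}=(x_{\mathcal N_1},\dots,x_{\mathcal N_{|\mathcal N|}})^T$ for a fixed ordering of $\mathcal N$. A trajectory of the normal agents on an interval $I\ni0$ is an absolutely continuous $x_{\mathcal N}:I\to\mathbb R^{|\mathcal N|}$ with $\dot x_{\mathcal N_k}(t)=u_{\mathcal N_k}(t)$ for all $k$ and almost every $t\in I$. Here $\mathbf 1$ is the all-ones vector. *)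

(* Defs.v *)
From HB Require Import structures.
From mathcomp Require Import all_boot all_order all_algebra.
From mathcomp Require Import all_classical all_reals all_analysis.
Set Implicit Arguments. Unset Strict Implicit. Unset Printing Implicit Defensive.
Import Order.TTheory GRing.Theory Num.Theory.
Import numFieldNormedType.Exports.

Local Open Scope ring_scope.

(* Digraph on agents 'I_n given by an edge relation E : rel 'I_n;
   E i j  means (i,j) is an edge: agent j receives information from agent i. *)

Definition in_nbrs (n : nat) (E : rel 'I_n) (i : 'I_n) : {set 'I_n} :=
  [set j | E j i].

Definition closed_nbrs (n : nat) (E : rel 'I_n) (i : 'I_n) : {set 'I_n} :=
  i |: in_nbrs E i.

Definition r_reachable (n : nat) (E : rel 'I_n) (S : {set 'I_n}) (r : nat) :
  Prop := exists2 i, i \in S & (r <= #|in_nbrs E i :\: S|)%N.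

Definition r_robust (n : nat) (E : rel 'I_n) (r : nat) : Prop :=
  forall S1 S2 : {set 'I_n}, S1 != finset.set0 -> S2 != finset.set0 -> [disjoint S1 & S2] ->
    r_reachable E S1 r \/ r_reachable E S2 r.

Definition F_local (n : nat) (E : rel 'I_n) (A : {set 'I_n}) (F : nat) : Prop :=
  forall i, i \notin A -> (#|in_nbrs E i :&: A| <= F)%N.

(* State value x^i_j(t) that normal agent i receives (through g) from j at
   time t: the true state x_j(t) if j is normal, and the arbitrary value
   y i j t if j is misbehaving. *)
Definition recv (R : realType) (n : nat) (A : {set 'I_n})
  (x : R -> 'I_n -> R) (y : 'I_n -> 'I_n -> R -> R) (i j : 'I_n) (t : R) : R :=
  if j \in A then y i j t else x t j.

(* Ties among the
   F largest (smallest) values may be broken arbitrarily; the resulting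
   sum does not depend on the choice. *)
Definition ftrc_removal (R : realType) (n : nat) (E : rel 'I_n) (F : nat)
  (i : 'I_n) (w : 'I_n -> R) (c : R) (Rl Rs : {set 'I_n}) : Prop :=
  let Lg := [set j in in_nbrs E i | c < w j] in
  let Sm := [set j in in_nbrs E i | w j < c] in
  [/\ Rl \subset Lg, #|Rl| = minn F #|Lg| &
      (forall j k, j \in Rl -> k \in Lg :\: Rl -> w k <= w j)] /\
  [/\ Rs \subset Sm, #|Rs| = minn F #|Sm| &
      (forall j k, j \in Rs -> k \in Sm :\: Rs -> w j <= w k)].

Definition ftrc_input (R : realType) (n : nat) (E : rel 'I_n) (A : {set 'I_n})
  (F : nat) (alpha : R) (g : R -> R) (x : R -> 'I_n -> R)
  (y : 'I_n -> 'I_n -> R -> R) (i : 'I_n) (t : R) (v : R) : Prop :=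
  let w := fun j => g (recv A x y i j t) in
  let c := g (x t i) in
  exists Rl Rs, ftrc_removal E F i w c Rl Rs /\
    v = alpha * Num.sg (\sum_(j in closed_nbrs E i :\: (Rl :|: Rs)) (w j - c)).

Definition abs_cont_on (R : realType) (a b : R) (f : R -> R) : Prop :=
  forall e : R, 0 < e -> exists2 d : R, 0 < d &
    forall (k : nat) (s s' : 'I_k -> R),
      (forall l, [/\ a <= s l, s l <= s' l & s' l <= b]) ->
      (forall l m, l != m -> s' l <= s m \/ s' m <= s l) ->
      \sum_(l < k) (s' l - s l) < d ->
      \sum_(l < k) `|f (s' l) - f (s l)| < e.

Definition Ival (R : realType) (t1 : \bar R) : set R :=
  fun t => 0 <= t /\ (t%:E < t1)%E.

Definition abs_cont_Ival (R : realType) (t1 : \bar R) (f : R -> R) : Prop :=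
  forall b : R, Ival t1 b -> abs_cont_on 0 b f.

Definition trajectory (R : realType) (n : nat) (E : rel 'I_n) (A : {set 'I_n})
  (F : nat) (alpha : R) (g : R -> R) (y : 'I_n -> 'I_n -> R -> R)
  (t1 : \bar R) (x : R -> 'I_n -> R) : Prop :=
  (forall i, i \notin A -> abs_cont_Ival t1 (fun s => x s i)) /\
  {ae (@lebesgue_measure R), forall t, Ival t1 t ->
     forall i, i \notin A ->
       derivable (fun s => x s i) t 1 /\
       ftrc_input E A F alpha g x y i t ('D_1 (fun s => x s i) t)}.

(* V(z) = max_k z_k - min_k z_k over the normal agents (0 if none) *)
Definition Vspread (R : realType) (n : nat) (N : {set 'I_n}) (z : 'I_n -> R) : R :=
  let s := [seq z i | i in N] in
  \big[Num.max/head 0 s]_(v <- s) v - \big[Num.min/head 0 s]_(v <- s) v.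

Definition in_span1 (R : realType) (n : nat) (N : {set 'I_n}) (z : 'I_n -> R) : Prop :=
  exists c : R, forall i, i \in N -> z i = c.

(* Lebesgue measurable subsets of R: those differing from a Borel set by a
   Lebesgue-negligible set (i.e. measurable for the completed measure). *)
Definition leb_measurable_set (R : realType) (S : set R) : Prop :=
  exists2 B : set R, measurable B &
    (@lebesgue_measure R).-negligible (setU (setD S B) (setD B S)).

Definition leb_measurable_fun (R : realType) (f : R -> R) : Prop :=
  forall B : set R, measurable B -> leb_measurable_set (preimage f B).

(* Main.v *)
Require Import Defs.
From HB Require Import structures.
From mathcomp Require Import all_boot all_order all_algebra.
From mathcomp Require Import all_classical all_reals all_analysis.
From mathcomp Require Import lra.
Import Order.TTheory GRing.Theory Num.Theory.
Import numFieldNormedType.Exports.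
Local Open Scope ring_scope.
Set Implicit Arguments. Unset Strict Implicit.

Section Helpers.
Variable R : realType.
Local Open Scope classical_set_scope.
Local Open Scope ring_scope.


Lemma isolated_zero (d : R -> R) t : derivable d t 1 -> d t = 0 -> 'D_1 d t != 0 ->
  exists2 e : R, 0 < e & forall s, `|s - t| < e -> d s = 0 -> s = t.
Proof.
move=> hd d0 D0.
have H : (fun h : R => h^-1 *: ((d \o shift t) (h *: 1) - d t)) @ 0^' --> 'D_1 d t := hd.
move/cvgrPdist_lt : H => /(_ `|'D_1 d t|); rewrite normr_gt0 => /(_ D0).
rewrite near_withinE /= => /nbhs_normP [e e0 He].
exists e => // s st ds; apply/eqP; apply/negPn/negP => sneq.
have := He (s - t); rewrite /= sub0r normrN => /(_ st); rewrite subr_eq0 => /(_ sneq).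
by rewrite /shift /= scaler1 subrK ds d0 subr0 scaler0 subr0 ltxx.
Qed.

Lemma pair_ae (f g : R -> R) :
  {ae (@lebesgue_measure R), forall t, derivable f t 1 -> derivable g t 1 ->
     f t = g t -> 'D_1 f t = 'D_1 g t}.
Proof.
set B := [set t | [/\ derivable f t 1, derivable g t 1, f t = g t & 'D_1 f t != 'D_1 g t]].
pose d := fun s => f s - g s.
pose P t (pq : rat * rat) := ratr pq.1 < t < ratr pq.2 /\
   forall s, ratr pq.1 < s < ratr pq.2 -> d s = 0 -> s = t.
have exP : forall t, B t -> exists pq, P t pq.
  move=> t [df dg ft Dt].
  have dd : derivable d t 1 by exact: derivableB.
  have [e e0 He] : exists2 e : R, 0 < e & forall s, `|s - t| < e -> d s = 0 -> s = t.
    apply: isolated_zero => //; first by rewrite /d ft subrr.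
    by rewrite /d deriveB // subr_eq0.
  have [p /andP[p1 p2]] : exists p : rat, ratr p \in `]t - e, t[.
    by apply: rat_in_itvoo; lra.
  have [q /andP[q1 q2]] : exists q : rat, ratr q \in `]t, t + e[.
    by apply: rat_in_itvoo; lra.
  rewrite !bnd_simp in p1 p2 q1 q2.
  exists (p, q); split => /=; first by rewrite p2 q1.
  move=> s /andP[ps sq]; apply: He; rewrite ltr_norml; apply/andP; split; lra.
have cB : countable B.
  apply/countable_injP; exists (fun t => choice.pickle (xget (0, 0) (P t))).
  move=> t t' Bt Bt' /(pcan_inj (@choice.pickleK _)) eq.
  move: Bt Bt'; rewrite !inE => Bt Bt'.
  have [Pt1 Pt2] := xgetPex (0, 0) (exP t Bt).
  have [Pt1' Pt2'] := xgetPex (0, 0) (exP t' Bt').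
  rewrite -eq in Pt1' Pt2'.
  symmetry; apply: Pt2 => //.
  by case: Bt' => _ _ ft _; rewrite /d ft subrr.
exists B; split.
- apply: countable_measurable => //; exact: measurable_set1.
- exact: countable_lebesgue_measure0.
- move=> t /= Ht; split.
  + by apply: contra_notP Ht => H; move=> df dg ft; apply/eqP/negPn/negP => Hn; apply: H.
  + by apply: contra_notP Ht => H; move=> df dg ft; apply/eqP/negPn/negP => Hn; apply: H.
  + by apply: contra_notP Ht => H; move=> df dg ft; apply/eqP/negPn/negP => Hn; apply: H.
  + by apply/negP => /eqP Hn; apply: Ht.
Qed.


Lemma near_above (g : R -> R) t eps : 0 < eps -> derivable g t 1 ->
  (g t < 0 \/ (g t = 0 /\ 'D_1 g t = 0)) ->
  \forall u \near 0^', g (u + t) <= eps * `|u|.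
Proof.
move=> e0 dg [gt0|[g0 D0]].
  have : g @ t --> g t.
    by apply: differentiable_continuous; apply/derivable1_diffP.
  move/cvgr_lt => /(_ 0 gt0) /nbhs_normP [d d0 Hd].
  rewrite near_withinE; apply/nbhs_normP; exists d => // u /= ud _.
  have := Hd (u + t); rewrite /= distrC addrK.
  move: ud; rewrite distrC subr0 => ud /(_ ud) H.
  apply: le_trans (ltW H) _; exact: mulr_ge0 (ltW e0) (normr_ge0 _).
have H : (fun h : R => h^-1 *: ((g \o shift t) (h *: 1) - g t)) @ 0^' --> 'D_1 g t := dg.
move/cvgrPdist_le : H => /(_ eps e0); apply: filter_app.
near=> u => Hu.
have [->|u0] := eqVneq u 0; first by rewrite add0r g0 normr0 mulr0.
move: Hu; rewrite D0 sub0r normrN /shift /= scaler1 g0 subr0.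
rewrite normrZ normfV ler_pdivrMl ?normr_gt0 // => H.
apply: le_trans (ler_norm _) _; by rewrite mulrC.
Unshelve. all: by end_near.
Qed.


Lemma max_deriv n (f : R -> R) (h : 'I_n -> R -> R) (N : {set 'I_n}) k t :
 k \in N -> f t = h k t ->
 (forall s, exists2 i, i \in N & f s = h i s) ->
 (forall s i, i \in N -> h i s <= f s) ->
 (forall i, i \in N -> derivable (h i) t 1) ->
 (forall i, i \in N -> h i t = h k t -> 'D_1 (h i) t = 'D_1 (h k) t) ->
 derivable f t 1 /\ 'D_1 f t = 'D_1 (h k) t.
Proof.
move=> kN fk fex fle dh Dh.
pose e s := f s - h k s.
have ce : (fun u : R => u^-1 *: ((e \o shift t) (u *: 1) - e t)) @ 0^' --> (0:R).
  apply/cvgrPdist_le => eps e0.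
  have Hall : \forall u \near 0^', forall i, i \in N -> h i (u + t) - h k (u + t) <= eps * `|u|.
    apply: filter_forall => i.
    have [iN|iN] := boolP (i \in N); last by apply: nearW => u iN'; exfalso; move/negP: iN; apply.
    have dg : derivable (fun s => h i s - h k s) t 1 by apply: derivableB; apply: dh.
    have hyp : (h i t - h k t < 0 \/ (h i t - h k t = 0 /\ 'D_1 (fun s => h i s - h k s) t = 0)).
      have := fle t i iN; rewrite fk le_eqVlt => /orP[/eqP hik|hik].
        right; split; first by rewrite hik subrr.
        by rewrite deriveB ?Dh ?subrr //; apply: dh.
      by left; rewrite subr_lt0.
    have := @near_above _ _ _ e0 dg hyp.
    by apply: filter_app; near=> u => H _; exact: H.
  move: Hall; apply: filter_app; near=> u => H.
  have [->|u0] := eqVneq u 0; first by rewrite invr0 scale0r subrr normr0 ltW.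
  have [i0 i0N fi0] := fex (u + t).
  have := H i0 i0N; rewrite -fi0 => Hle.
  have ge := fle (u + t) k kN.
  rewrite /e /shift /= scaler1 fk subrr subr0 sub0r normrN normrZ normfV.
  rewrite [`|f _ - _|]ger0_norm ?subr_ge0 // ler_pdivrMl ?normr_gt0 // mulrC //.
have de : derivable e t 1 by apply/cvg_ex; exists 0.
have De : 'D_1 e t = 0 by apply: cvg_lim.
have -> : f = (fun s => e s + h k s) by apply/funext => s; rewrite /e subrK.
split; first by apply: derivableD => //; apply: dh.
by rewrite deriveD ?De ?add0r //; apply: dh.
Unshelve. all: by end_near.
Qed.
Local Close Scope classical_set_scope.


Lemma ftrc_le n (E : rel 'I_n) F i (w : 'I_n -> R) c Rl Rs (Bad : {set 'I_n}) :
  ftrc_removal E F i w c Rl Rs ->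
  (#|in_nbrs E i :&: Bad| <= F)%N ->
  (forall j, j \in in_nbrs E i -> j \notin Bad -> w j <= c) ->
  w i <= c ->
  (\sum_(j in closed_nbrs E i :\: (Rl :|: Rs)) (w j - c) <= 0) /\
  ((F < #|[set j in in_nbrs E i | (j \notin Bad) && (w j < c)%R]|)%N ->
     \sum_(j in closed_nbrs E i :\: (Rl :|: Rs)) (w j - c) < 0).
Proof.
rewrite /ftrc_removal /=.
set Lg := [set j in in_nbrs E i | c < w j].
move=> [[RlL cRl _] [RsS cRs _]] cBad Hw Hwi.
have LgB : Lg \subset in_nbrs E i :&: Bad.
  apply/fintype.subsetP => j; rewrite !inE => /andP[jV cj]; rewrite jV /=.
  apply/negPn/negP => jB; have jV' : j \in in_nbrs E i by rewrite inE.
  by move: (Hw j jV' jB); rewrite leNgt cj.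
have cLg : (#|Lg| <= F)%N by apply: leq_trans (subset_leq_card LgB) cBad.
have RlE : Rl = Lg.
  apply/eqP; rewrite eqEcard RlL /= cRl; move/minn_idPr: cLg => ->; exact: leqnn.
have Hle : forall j, j \in closed_nbrs E i :\: (Rl :|: Rs) -> w j - c <= 0.
  move=> j; rewrite !inE RlE !inE subr_le0 => /andP[/norP[/negbTE jL _]].
  case/orP => [/eqP ->|jV] //; by move: jL; rewrite jV /= => /negbT; rewrite -leNgt.
split; first by apply: sumr_le0.
move=> cT.
have [j jT jRs] : exists2 j, j \in [set j in in_nbrs E i | (j \notin Bad) && (w j < c)%R] & j \notin Rs.
  apply/exists_inP; rewrite -negb_forall_in; apply/negP => /forall_inP H.
  have : [set j in in_nbrs E i | (j \notin Bad) && (w j < c)%R] \subset Rs.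
    by apply/fintype.subsetP => j /H.
  move/subset_leq_card; rewrite cRs => H2.
  have := leq_trans H2 (geq_minl _ _); rewrite leqNgt cT //.
move: jT; rewrite !inE => /andP[jV /andP[_ wj]].
have jC : j \in closed_nbrs E i :\: (Rl :|: Rs).
  rewrite !inE RlE !inE jV orbT andbT negb_or (negbTE jRs) andbT /=.
  by rewrite -leNgt ltW.
rewrite (bigD1 j) //=.
have : \sum_(k in closed_nbrs E i :\: (Rl :|: Rs) | k != j) (w k - c) <= 0.
  by apply: sumr_le0 => k /andP[kC _]; apply: Hle.
move: wj; rewrite -subr_lt0; lra.
Qed.

Lemma ftrc_ge n (E : rel 'I_n) F i (w : 'I_n -> R) c Rl Rs (Bad : {set 'I_n}) :
  ftrc_removal E F i w c Rl Rs ->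
  (#|in_nbrs E i :&: Bad| <= F)%N ->
  (forall j, j \in in_nbrs E i -> j \notin Bad -> c <= w j) ->
  c <= w i ->
  (0 <= \sum_(j in closed_nbrs E i :\: (Rl :|: Rs)) (w j - c)) /\
  ((F < #|[set j in in_nbrs E i | (j \notin Bad) && (c < w j)%R]|)%N ->
     0 < \sum_(j in closed_nbrs E i :\: (Rl :|: Rs)) (w j - c)).
Proof.
rewrite /ftrc_removal /=.
set Sm := [set j in in_nbrs E i | w j < c].
move=> [[RlL cRl _] [RsS cRs _]] cBad Hw Hwi.
have SmB : Sm \subset in_nbrs E i :&: Bad.
  apply/fintype.subsetP => j; rewrite !inE => /andP[jV cj]; rewrite jV /=.
  apply/negPn/negP => jB; have jV' : j \in in_nbrs E i by rewrite inE.
  by move: (Hw j jV' jB); rewrite leNgt cj.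
have cSm : (#|Sm| <= F)%N by apply: leq_trans (subset_leq_card SmB) cBad.
have RsE : Rs = Sm.
  apply/eqP; rewrite eqEcard RsS /= cRs; move/minn_idPr: cSm => ->; exact: leqnn.
have Hle : forall j, j \in closed_nbrs E i :\: (Rl :|: Rs) -> 0 <= w j - c.
  move=> j; rewrite !inE RsE !inE subr_ge0 => /andP[/norP[_ /negbTE jL]].
  case/orP => [/eqP ->|jV] //; by move: jL; rewrite jV /= => /negbT; rewrite -leNgt.
split; first by apply: sumr_ge0.
move=> cT.
have [j jT jRl] : exists2 j, j \in [set j in in_nbrs E i | (j \notin Bad) && (c < w j)%R] & j \notin Rl.
  apply/exists_inP; rewrite -negb_forall_in; apply/negP => /forall_inP H.
  have : [set j in in_nbrs E i | (j \notin Bad) && (c < w j)%R] \subset Rl.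
    by apply/fintype.subsetP => j /H.
  move/subset_leq_card; rewrite cRl => H2.
  have := leq_trans H2 (geq_minl _ _); rewrite leqNgt cT //.
move: jT; rewrite !inE => /andP[jV /andP[_ wj]].
have jC : j \in closed_nbrs E i :\: (Rl :|: Rs).
  rewrite !inE RsE !inE jV orbT andbT negb_or (negbTE jRl) /=.
  by rewrite -leNgt ltW.
rewrite (bigD1 j) //=.
have : 0 <= \sum_(k in closed_nbrs E i :\: (Rl :|: Rs) | k != j) (w k - c).
  by apply: sumr_ge0 => k /andP[kC _]; apply: Hle.
move: wj; rewrite -subr_gt0; lra.
Qed.


Lemma bigmax_seq (s : seq R) x0 :
  (forall v, v \in s -> v <= \big[Num.max/x0]_(v <- s) v) /\
  (\big[Num.max/x0]_(v <- s) v \in x0 :: s).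
Proof.
elim: s => [|a s [IH1 IH2]]; first by rewrite big_nil mem_head.
rewrite big_cons; split.
  move=> v; rewrite inE => /orP[/eqP ->|vs]; first by rewrite le_max lexx.
  by rewrite le_max IH1 ?orbT.
case: (leP a (\big[Num.max/x0]_(v <- s) v)) => H.
  move: IH2; rewrite !inE => /orP[->|->] //; by rewrite !orbT.
by rewrite !inE eqxx orbT.
Qed.

Lemma bigmin_seq (s : seq R) x0 :
  (forall v, v \in s -> \big[Num.min/x0]_(v <- s) v <= v) /\
  (\big[Num.min/x0]_(v <- s) v \in x0 :: s).
Proof.
elim: s => [|a s [IH1 IH2]]; first by rewrite big_nil mem_head.
rewrite big_cons; split.
  move=> v; rewrite inE => /orP[/eqP ->|vs]; first by rewrite ge_min lexx.
  by rewrite ge_min IH1 ?orbT.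
case: (leP a (\big[Num.min/x0]_(v <- s) v)) => H.
  by rewrite !inE eqxx orbT.
move: IH2; rewrite !inE => /orP[->|->] //; by rewrite !orbT.
Qed.

Definition vmax n (N : {set 'I_n}) (z : 'I_n -> R) :=
  \big[Num.max/head 0 [seq z i | i in N]]_(v <- [seq z i | i in N]) v.
Definition vmin n (N : {set 'I_n}) (z : 'I_n -> R) :=
  \big[Num.min/head 0 [seq z i | i in N]]_(v <- [seq z i | i in N]) v.

Arguments vmax {n}.
Arguments vmin {n}.

Lemma VspreadE n (N : {set 'I_n}) z : Vspread N z = vmax N z - vmin N z.
Proof. by []. Qed.

Lemma head_in (s : seq R) x0 : s != [::] -> forall v, v \in head x0 s :: s -> v \in s.
Proof. by case: s => // a s _ v; rewrite inE => /orP[/eqP ->|]; rewrite ?mem_head. Qed.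

Lemma vmax_spec n (N : {set 'I_n}) (z : 'I_n -> R) : N != finset.set0 ->
  (exists2 i, i \in N & vmax N z = z i) /\ (forall i, i \in N -> z i <= vmax N z).
Proof.
move=> N0.
have sn : [seq z i | i in N] != [::].
  case/set0Pn: N0 => i iN; apply/eqP => H.
  have : z i \in [seq z i | i in N] by apply: map_f; rewrite mem_enum.
  by rewrite H.
have [H1 H2] := bigmax_seq [seq z i | i in N] (head 0 [seq z i | i in N]).
split; last by move=> i iN; apply: H1; apply: map_f; rewrite mem_enum.
have := @head_in _ _ sn _ H2; case/mapP => i; rewrite mem_enum => iN Ei; by exists i.
Qed.

Lemma vmin_spec n (N : {set 'I_n}) (z : 'I_n -> R) : N != finset.set0 ->
  (exists2 i, i \in N & vmin N z = z i) /\ (forall i, i \in N -> vmin N z <= z i).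
Proof.
move=> N0.
have sn : [seq z i | i in N] != [::].
  case/set0Pn: N0 => i iN; apply/eqP => H.
  have : z i \in [seq z i | i in N] by apply: map_f; rewrite mem_enum.
  by rewrite H.
have [H1 H2] := bigmin_seq [seq z i | i in N] (head 0 [seq z i | i in N]).
split; last by move=> i iN; apply: H1; apply: map_f; rewrite mem_enum.
have := @head_in _ _ sn _ H2; case/mapP => i; rewrite mem_enum => iN Ei; by exists i.
Qed.

Lemma Vspread_empty n (z : 'I_n -> R) : Vspread finset.set0 z = 0.
Proof.
rewrite VspreadE /vmax /vmin.
have -> : [seq z i | i in (finset.set0 : {set 'I_n})] = [::].
  by apply/eqP; rewrite -size_eq0 size_map -cardE cards0.
by rewrite !big_nil subrr.
Qed.
End Helpers.

Unset Implicit Arguments. Set Strict Implicit.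

Section Main.
Variable R : realType.

Lemma deriv_V n (N : {set 'I_n}) (x : R -> 'I_n -> R) t :
  (forall i, i \in N -> derivable (fun s => x s i) t 1) ->
  (forall i j, i \in N -> j \in N -> x t i = x t j ->
     'D_1 (fun s => x s i) t = 'D_1 (fun s => x s j) t) ->
  derivable (fun s => Vspread N (x s)) t 1 /\
  forall k j, k \in N -> j \in N -> x t k = vmax N (x t) -> x t j = vmin N (x t) ->
    'D_1 (fun s => Vspread N (x s)) t =
      'D_1 (fun s => x s k) t - 'D_1 (fun s => x s j) t.
Proof.
move=> dx Dx.
have [->|N0] := eqVneq N finset.set0.
  have -> : (fun s => Vspread finset.set0 (x s)) = cst 0.
    by apply/funext => s; rewrite Vspread_empty.
  by split; [exact: derivable_cst | move=> k j; rewrite inE].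
have Hmax : forall k, k \in N -> x t k = vmax N (x t) ->
    derivable (fun s => vmax N (x s)) t 1 /\
    'D_1 (fun s => vmax N (x s)) t = 'D_1 (fun s => x s k) t.
  move=> k kN xk.
  apply: (@max_deriv R n _ (fun i s => x s i) N k t kN) => //.
  - by move=> s; have [[i iN ->] _] := vmax_spec (x s) N0; exists i.
  - by move=> s i iN; have [_ ->] := vmax_spec (x s) N0.
  - by move=> i iN xik; apply: Dx.
have Hmin : forall j, j \in N -> x t j = vmin N (x t) ->
    derivable (fun s => - vmin N (x s)) t 1 /\
    'D_1 (fun s => - vmin N (x s)) t = - 'D_1 (fun s => x s j) t.
  move=> j jN xj.
  have [H1 H2] : derivable (fun s => - vmin N (x s)) t 1 /\
      'D_1 (fun s => - vmin N (x s)) t = 'D_1 (fun s => - x s j) t.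
    apply: (@max_deriv R n (fun s => - vmin N (x s)) (fun i s => - x s i) N j t jN).
    - by rewrite xj.
    - by move=> s; have [[i iN ->] _] := vmin_spec (x s) N0; exists i.
    - by move=> s i iN; have [_ H] := vmin_spec (x s) N0; rewrite lerN2 H.
    - by move=> i iN; apply: derivableN; apply: dx.
    - move=> i iN /eqP; rewrite eqr_opp => /eqP xij.
      rewrite !deriveN; [by rewrite (Dx i j)| |]; by apply: dx.
  by split => //; rewrite H2 deriveN //; apply: dx.
have VE : (fun s => Vspread N (x s)) = (fun s => vmax N (x s) + - vmin N (x s)).
  by apply/funext => s; rewrite VspreadE.
have [[k kN xk] _] := vmax_spec (x t) N0.
have [[j jN xj] _] := vmin_spec (x t) N0.
have [d1 _] := Hmax k kN (esym xk).
have [d2 _] := Hmin j jN (esym xj).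
rewrite VE; split; first exact: derivableD.
move=> k' j' k'N j'N xk' xj'.
have [d1' D1] := Hmax k' k'N xk'.
have [d2' D2] := Hmin j' j'N xj'.
by rewrite deriveD // D1 D2.
Qed.

Lemma homo_le (g : R -> R) : {homo g : a b / a < b} -> forall a b, a <= b -> g a <= g b.
Proof. by move=> gh a b; rewrite le_eqVlt => /orP[/eqP ->|/gh/ltW]. Qed.

Lemma card_reach n (E : rel 'I_n) (A S : {set 'I_n}) F i :
  (#|in_nbrs E i :&: A| <= F)%N ->
  (2 * F + 1 <= #|in_nbrs E i :\: S|)%N ->
  (F < #|(in_nbrs E i :\: S) :\: A|)%N.
Proof.
move=> cA cX.
have := cardsID A (in_nbrs E i :\: S).
have : (#|(in_nbrs E i :\: S) :&: A| <= F)%N.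
  apply: leq_trans cA; apply: subset_leq_card.
  by apply/fintype.subsetP => j; rewrite !inE => /andP[/andP[_ ->] ->].
move=> h1 h2; rewrite -h2 in cX.
rewrite ltnNge; apply/negP => h3.
have := leq_add h1 h3; move: cX; rewrite addn1 mul2n -addnn => cX h4.
by have := leq_trans cX h4; rewrite ltnn.
Qed.

Lemma u_max n (E : rel 'I_n) (A : {set 'I_n}) (F : nat) (alpha : R) (g : R -> R)
  (x : R -> 'I_n -> R) (y : 'I_n -> 'I_n -> R -> R) (i : 'I_n) (t v : R) :
  i \notin A -> (forall j, j \notin A -> x t j <= x t i) ->
  F_local E A F -> {homo g : a b / a < b} -> 0 < alpha ->
  ftrc_input E A F alpha g x y i t v ->
  v <= 0 /\ ((2 * F + 1 <= #|in_nbrs E i :\: [set j | (j \notin A) && (x t j == x t i)]|)%N ->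
     v = - alpha).
Proof.
move=> iA Hm Floc gh a0 [Rl [Rs [Hr ->]]].
have gle := @homo_le g gh.
have H1 : forall j, j \in in_nbrs E i -> j \notin A -> g (recv A x y i j t) <= g (x t i).
  by move=> j _ jA; rewrite /recv (negbTE jA); apply: gle; apply: Hm.
have H2 : g (recv A x y i i t) <= g (x t i) by rewrite /recv (negbTE iA).
have [Hle Hlt] := ftrc_le Hr (Floc i iA) H1 H2.
split; first by rewrite pmulr_rle0 // sgr_le0.
move=> reach; rewrite ltr0_sg ?mulrN1 //; apply: Hlt.
apply: leq_trans (@card_reach _ _ _ _ _ _ (Floc i iA) reach) _.
apply: subset_leq_card; apply/fintype.subsetP => j; rewrite !inE => /andP[jA /andP[/negP jS jV]].
rewrite jV jA /= /recv (negbTE jA); apply: gh.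
rewrite lt_neqAle Hm // andbT; apply/negP => /eqP e; apply: jS; by rewrite jA e eqxx.
Qed.
Lemma u_min n (E : rel 'I_n) (A : {set 'I_n}) (F : nat) (alpha : R) (g : R -> R)
  (x : R -> 'I_n -> R) (y : 'I_n -> 'I_n -> R -> R) (i : 'I_n) (t v : R) :
  i \notin A -> (forall j, j \notin A -> x t i <= x t j) ->
  F_local E A F -> {homo g : a b / a < b} -> 0 < alpha ->
  ftrc_input E A F alpha g x y i t v ->
  0 <= v /\ ((2 * F + 1 <= #|in_nbrs E i :\: [set j | (j \notin A) && (x t j == x t i)]|)%N ->
     v = alpha).
Proof.
move=> iA Hm Floc gh a0 [Rl [Rs [Hr ->]]].
have gle := @homo_le g gh.
have H1 : forall j, j \in in_nbrs E i -> j \notin A -> g (x t i) <= g (recv A x y i j t).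
  by move=> j _ jA; rewrite /recv (negbTE jA); apply: gle; apply: Hm.
have H2 : g (x t i) <= g (recv A x y i i t) by rewrite /recv (negbTE iA).
have [Hle Hlt] := ftrc_ge Hr (Floc i iA) H1 H2.
split; first by rewrite pmulr_rge0 // sgr_ge0.
move=> reach; rewrite gtr0_sg ?mulr1 //; apply: Hlt.
apply: leq_trans (@card_reach _ _ _ _ _ _ (Floc i iA) reach) _.
apply: subset_leq_card; apply/fintype.subsetP => j; rewrite !inE => /andP[jA /andP[/negP jS jV]].
rewrite jV jA /= /recv (negbTE jA); apply: gh.
rewrite lt_neqAle Hm // andbT; apply/negP => /eqP e; apply: jS; by rewrite jA e eqxx.
Qed.
End Main.

Local Open Scope classical_set_scope.
Local Open Scope ring_scope.

Theorem theorem4 (R : realType) (n : nat) (E : rel 'I_n) (A : {set 'I_n})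
  (F : nat) (alpha : R) (g : R -> R) (y : 'I_n -> 'I_n -> R -> R)
  (t1 : \bar R) (x : R -> 'I_n -> R) :
  (1 < n)%N ->
  0 < alpha ->
  {homo g : a b / a < b} ->
  (forall k i, k \in A -> i \notin A -> leb_measurable_fun (fun t => g (y i k t))) ->
  F_local E A F ->
  r_robust E (2 * F + 1) ->
  trajectory E A F alpha g y t1 x ->
  {ae (@lebesgue_measure R), forall t, Ival t1 t ->
     derivable (fun s => Vspread (~: A) (x s)) t 1} /\
  {ae (@lebesgue_measure R), forall t, Ival t1 t ->
     ~ in_span1 (~: A) (x t) ->
     'D_1 (fun s => Vspread (~: A) (x s)) t <= - alpha /\ - alpha < 0}.
Proof.
move=> n1 a0 gh _ Floc rob [_ traj].
have FF := ae_filter_ringOfSetsType (@lebesgue_measure R).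
have pairs : {ae (@lebesgue_measure R), forall t, forall i j : 'I_n,
    derivable (fun s => x s i) t 1 -> derivable (fun s => x s j) t 1 ->
    x t i = x t j -> 'D_1 (fun s => x s i) t = 'D_1 (fun s => x s j) t}.

  apply: (filter_forall FF) => i; apply: (filter_forall FF) => j; exact: pair_ae.
have good : {ae (@lebesgue_measure R), forall t, Ival t1 t ->
    derivable (fun s => Vspread (~: A) (x s)) t 1 /\
    (~ in_span1 (~: A) (x t) ->
     'D_1 (fun s => Vspread (~: A) (x s)) t <= - alpha)}.
  move: traj pairs; apply: (filter_app2 FF); apply: (@filterE _ _ FF) => t Htr Hp It.
  have {}Htr := Htr It.
  have dx : forall i, i \in ~: A -> derivable (fun s => x s i) t 1.
    by move=> i; rewrite finset.in_setC => iA; have [] := Htr i iA.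
  have Dx : forall i j, i \in ~: A -> j \in ~: A -> x t i = x t j ->
      'D_1 (fun s => x s i) t = 'D_1 (fun s => x s j) t.
    by move=> i j iN jN; apply: Hp; apply: dx.
  have [dV DV] := @deriv_V R n (~: A) x t dx Dx.
  split => // nspan.
  have N0 : ~: A != finset.set0.
    apply/negP => /eqP N0; apply: nspan; exists 0 => i; by rewrite N0 inE.
  have [[k kN xk] Hk] := @vmax_spec R n (~: A) (x t) N0.
  have [[j jN xj] Hj] := @vmin_spec R n (~: A) (x t) N0.
  have Mm : vmax (~: A) (x t) != vmin (~: A) (x t).
    apply/negP => /eqP Mm; apply: nspan; exists (vmax (~: A) (x t)) => i iN.
    by apply/eqP; rewrite eq_le Hk // Mm Hj.
  set S1 := [set i | (i \notin A) && (x t i == x t k)]%SET.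
  set S2 := [set i | (i \notin A) && (x t i == x t j)]%SET.
  have kA : k \notin A by rewrite -finset.in_setC.
  have jA : j \notin A by rewrite -finset.in_setC.
  have := rob S1 S2.
  case.
  - by apply/set0Pn; exists k; rewrite inE kA eqxx.
  - by apply/set0Pn; exists j; rewrite inE jA eqxx.
  - rewrite -setI_eq0; apply/eqP/setP => i; rewrite !inE.
    apply/negP => /andP[/andP[_ /eqP e1] /andP[_ /eqP e2]].
    by move: Mm; rewrite xk xj -e1 -e2 eqxx.
  - case=> i; rewrite inE => /andP[iA /eqP xi] reach.
    have Hmi : forall j', j' \notin A -> x t j' <= x t i.
      by move=> j' jA'; rewrite xi -xk; apply: Hk; rewrite finset.in_setC.
    have [_ ui] := @u_max R n E A F alpha g x y i t _ iA Hmi Floc gh a0 (Htr i iA).2.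
    have Hmj : forall j', j' \notin A -> x t j <= x t j'.
      by move=> j' jA'; rewrite -xj; apply: Hj; rewrite finset.in_setC.
    have [uj _] := @u_min R n E A F alpha g x y j t _ jA Hmj Floc gh a0 (Htr j jA).2.
    have eS : [set j0 | (j0 \notin A) && (x t j0 == x t i)]%SET = S1.
      by apply/finset.setP => j0; rewrite !inE xi.
    have e1 : x t i = vmax (~: A) (x t) by rewrite xi xk.
    rewrite (DV i j _ jN e1 (esym xj)); last by rewrite finset.in_setC.
    rewrite -eS in reach; have := ui reach; lra.
  - case=> i; rewrite inE => /andP[iA /eqP xi] reach.
    have Hmi : forall j', j' \notin A -> x t i <= x t j'.
      by move=> j' jA'; rewrite xi -xj; apply: Hj; rewrite finset.in_setC.
    have [_ ui] := @u_min R n E A F alpha g x y i t _ iA Hmi Floc gh a0 (Htr i iA).2.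
    have Hmk : forall j', j' \notin A -> x t j' <= x t k.
      by move=> j' jA'; rewrite -xk; apply: Hk; rewrite finset.in_setC.
    have [uk _] := @u_max R n E A F alpha g x y k t _ kA Hmk Floc gh a0 (Htr k kA).2.
    have eS : [set j0 | (j0 \notin A) && (x t j0 == x t i)]%SET = S2.
      by apply/finset.setP => j0; rewrite !inE xi.
    have e1 : x t i = vmin (~: A) (x t) by rewrite xi xj.
    rewrite (DV k i kN _ (esym xk) e1); last by rewrite finset.in_setC.
    rewrite -eS in reach; have := ui reach; lra.
split.
  by move: good; apply: (filterS (F := almost_everywhere (@lebesgue_measure R))) => t H It; have [] := H It.
move: good; apply: (filterS (F := almost_everywhere (@lebesgue_measure R))) => t H It ns.
have [_ H2] := H It; split; [exact: H2 ns | by rewrite oppr_lt0].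
Qed.
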